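(* Fractional weak stability does not imply ex-post weak stability: there exist a set $N$ of $n$ agents and a set $O$ of $n$ objects, with weak preferences $\succsim_i$ over $O$ ($i\in N$) and weak priorities $\succsim_o$ over $N$ ($o\in O$), and a random matching $p$ that is fractionally weakly stable but not ex-post weakly stable.
   Context: Preferences $\succsim_i$ and priorities $\succsim_o$ are weak orders (complete and transitive), with strict parts $\succ_i,\succ_o$. A random matching is an $n\times n$ bistochastic matrix $p=[p(i,o)]_{i\in N,o\in O}$ (nonnegative entries, every row and every column summing to $1$); it is deterministic if all entries lie in $\{0,1\}$. A deterministic matching $p$ is weakly stable if there exist no $i,j\in N$, $o,o'\in O$ with $p(i,o')=1$, $p(j,o)=1$, $o\succ_i o'$ and $i\succ_o j$. A random matching is ex-post weakly stable if it can be written as $\sum_{j=1}^k\lambda_jP_j$ with each $P_j$ a weakly stable deterministic matching, $\lambda_j\in(0,1]$, $\sum_j\lambda_j=1$. It is fractionally weakly stable if for every $(i,o)\in N\times O$, $\sum_{o':o'\succsim_i o,\,o'\neq o}p(i,o')\ge\sum_{j:i\succ_o j}p(j,o)$. *)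

(* Defs.v *)
From HB Require Import structures.
From mathcomp Require Import all_boot all_order all_algebra.
From mathcomp Require Import Rstruct.
Set Implicit Arguments. Unset Strict Implicit. Unset Printing Implicit Defensive.
Import Order.TTheory GRing.Theory Num.Theory.
Local Open Scope ring_scope.

Notation R := Rdefinitions.R.

(* Agents N and objects O are both indexed by 'I_n.
   A weak order is given by a relation r with r a b meaning "a ≿ b". *)
Definition weak_order (T : Type) (r : rel T) : Prop :=
  (forall a b, r a b || r b a) /\ (forall a b c, r a b -> r b c -> r a c).

Definition strict (T : Type) (r : rel T) (a b : T) : bool := r a b && ~~ r b a.

(* bistochastic n x n matrix, indexed [agent, object] *)
Definition bistochastic (n : nat) (p : 'M[R]_n) : Prop :=
  (forall i o, 0 <= p i o) /\
  (forall i, \sum_(o < n) p i o = 1) /\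
  (forall o, \sum_(i < n) p i o = 1).

Definition deterministic (n : nat) (p : 'M[R]_n) : Prop :=
  bistochastic p /\ (forall i o, p i o = 0 \/ p i o = 1).

(* pref i : preference of agent i over objects; prio o : priority of object o over agents *)
Definition weakly_stable (n : nat) (pref : 'I_n -> rel 'I_n)
  (prio : 'I_n -> rel 'I_n) (p : 'M[R]_n) : Prop :=
  deterministic p /\
  ~ (exists (i j o o' : 'I_n),
       [/\ p i o' = 1, p j o = 1, strict (pref i) o o' & strict (prio o) i j]).

Definition ex_post_weakly_stable (n : nat) (pref : 'I_n -> rel 'I_n)
  (prio : 'I_n -> rel 'I_n) (p : 'M[R]_n) : Prop :=
  exists (k : nat) (lam : 'I_k -> R) (P : 'I_k -> 'M[R]_n),
    [/\ (forall j, weakly_stable pref prio (P j)),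
        (forall j, 0 < lam j <= 1),
        \sum_(j < k) lam j = 1
      & p = \sum_(j < k) lam j *: P j].

Definition fractionally_weakly_stable (n : nat) (pref : 'I_n -> rel 'I_n)
  (prio : 'I_n -> rel 'I_n) (p : 'M[R]_n) : Prop :=
  forall i o : 'I_n,
    \sum_(o' < n | pref i o' o && (o' != o)) p i o'
      >= \sum_(j < n | strict (prio o) i j) p j o.

(* Main.v *)
Require Import Defs.
From HB Require Import structures.
From mathcomp Require Import all_boot all_order all_algebra.
From mathcomp Require Import Rstruct.
From mathcomp Require Import lra.
Import Order.TTheory GRing.Theory Num.Theory.
Local Open Scope ring_scope.

Definition rk0 (x : nat) : nat := if x == 2%N then 1%N else 0%N.
Definition rka (x : nat) : nat := if x == 1%N then 0%N else if x == 0%N then 1%N else 2%N.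
Definition pref3 (i : 'I_3) : rel 'I_3 :=
  fun x y => if val i == 0%N then (rk0 x <= rk0 y)%N else true.
Definition prio3 (o : 'I_3) : rel 'I_3 :=
  fun x y => if val o == 0%N then (rka x <= rka y)%N else true.
Definition supp (i o : nat) : bool :=
  [|| (i == 0%N) && (o == 1%N), (i == 0%N) && (o == 2%N),
      (i == 1%N) && (o == 0%N), (i == 1%N) && (o == 1%N),
      (i == 2%N) && (o == 0%N) | (i == 2%N) && (o == 2%N)].
Definition p3 : 'M[Rdefinitions.R]_3 :=
  \matrix_(i, o) (if supp i o then 2%:R^-1 else 0).

Lemma wo_rank (f : nat -> nat) (b : bool) :
  weak_order (fun x y : 'I_3 => if b then (f x <= f y)%N else true).
Proof.
split.
- move=> x y; case: b => //; exact: leq_total.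
- move=> x y z; case: b => // ; exact: leq_trans.
Qed.

Lemma sumP (k : nat) (lam : 'I_k -> Rdefinitions.R) (P : 'I_k -> 'M[Rdefinitions.R]_3) i o :
  (\sum_(j < k) lam j *: P j) i o = \sum_(j < k) lam j * P j i o.
Proof. rewrite summxE; apply: eq_bigr => j _; by rewrite mxE. Qed.

Lemma sum3c (P : pred 'I_3) (F : 'I_3 -> Rdefinitions.R) :
  \sum_(i < 3 | P i) F i =
  (if P ord0 then F ord0 else 0) + (if P (lift ord0 ord0) then F (lift ord0 ord0) else 0)
  + (if P (lift ord0 (lift ord0 ord0)) then F (lift ord0 (lift ord0 ord0)) else 0).
Proof. by rewrite big_mkcond !big_ord_recl big_ord0 Monoid.mulm1 Monoid.mulmA. Qed.

Notation A0 := (ord0 : 'I_3).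
Notation A1 := (lift ord0 (ord0 : 'I_2) : 'I_3).
Notation A2 := (lift ord0 (lift ord0 (ord0 : 'I_1)) : 'I_3).
Lemma sum3 (F : 'I_3 -> Rdefinitions.R) :
  \sum_(i < 3) F i = F A0 + F A1 + F A2.
Proof. by rewrite !big_ord_recl big_ord0 Monoid.mulm1 Monoid.mulmA. Qed.

Theorem proposition17 :
  exists (n : nat) (pref : 'I_n -> rel 'I_n) (prio : 'I_n -> rel 'I_n)
         (p : 'M[Rdefinitions.R]_n),
    [/\ (forall i, weak_order (pref i)),
        (forall o, weak_order (prio o)),
        bistochastic p,
        fractionally_weakly_stable pref prio p
      & ~ ex_post_weakly_stable pref prio p].
Proof.
exists 3%N, pref3, prio3, p3; split.
- move=> i; exact: wo_rank.
- move=> o; exact: wo_rank.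
- split; [|split].
  + move=> i o; rewrite mxE; case: ifP => _; lra.
  + case=> [[|[|[|i]]] Hi] //; rewrite !big_ord_recl big_ord0 !mxE /=; lra.
  + case=> [[|[|[|i]]] Hi] //; rewrite !big_ord_recl big_ord0 !mxE /=; lra.
- case=> [[|[|[|i]]] Hi] //; case=> [[|[|[|o]]] Ho] //;
  rewrite /p3 !sum3c !mxE /=; lra.
- case=> k [lam [P [Hst Hlam Hsum Hp]]].
  pose a0 : 'I_3 := ord0. pose a1 : 'I_3 := lift ord0 (ord0 : 'I_2). pose a2 : 'I_3 := lift ord0 (lift ord0 (ord0 : 'I_1)).
  have Hdet j : deterministic (P j) by case: (Hst j).
  have H02 : \sum_(j < k) lam j * P j a0 a2 = 2%:R^-1.
    by rewrite -sumP -Hp /p3 mxE.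
  have H21 : \sum_(j < k) lam j * P j a2 a1 = 0.
    by rewrite -sumP -Hp /p3 mxE.
  case: (boolP [exists j, P j a0 a2 == 1]) => [/existsP [j /eqP Hj] | /existsPn Hn]; last first.
    move: H02; rewrite big1.
      move=> H; have H2 : (0:Rdefinitions.R) < 2%:R^-1 by rewrite invr_gt0 ltr0n.
      by rewrite -H ltxx in H2.
    move=> j _; have [_ Hj] := Hdet j; case: (Hj a0 a2) => H1; first by rewrite H1 mulr0.
    by move: (Hn j); rewrite H1 eqxx.
  have Hj21 : P j a2 a1 = 0.
    have Hz := psumr_eq0P _ H21.
    have : lam j * P j a2 a1 = 0.
      apply: Hz => // j' _; have [[Hb _] _] := Hdet j'; have := Hlam j'.
      move=> /andP [Hl _]; apply: mulr_ge0; [exact: ltW | exact: Hb].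
    move/eqP; rewrite mulf_eq0 => /orP [/eqP H0|/eqP //].
    by have := Hlam j; rewrite H0 ltxx.
  have [[Hnn [Hrow Hcol]] _] := Hdet j.
  have Hc := Hcol a2; have Hr := Hrow a2.
  rewrite !sum3 in Hc Hr.
  have := Hnn a1 a2; have := Hnn a2 a2; have := Hnn a2 a0.
  move=> h1 h2 h3.
  have Hj20 : P j a2 a0 = 1.
    move: Hc Hr; rewrite /a0 /a1 /a2 in Hj Hj21 h1 h2 h3 *; rewrite Hj Hj21 => Hc Hr.
    lra.
  have [_ Hns] := Hst j; apply: Hns.
  by exists a0, a2, a0, a2; split.
Qed.
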